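(* Let $R$ and $R'$ be (not necessarily commutative) subrings of a $\mathbb Q$-algebra, let $\Gamma$ be an order of a number field, let $d\ge1$ be an integer and $\Gamma'=\mathbb Z[d\Gamma]$. Suppose $dR\subseteq R'$ and $R'\subseteq R$. Then the number of $\Gamma$-structures on $R$ is at most the number of $\Gamma'$-structures on $R'$.
   Context: For rings $A,B$, $\operatorname{Hom}(A,B)$ is the set of ring morphisms $A\to B$, with $B^\times$ acting by conjugation; an $A$-structure on $B$ is an element of $\operatorname{Hom}(A,B)/B^\times$. *)

(* Defs.v *)
From HB Require Import structures.
From mathcomp Require Import all_boot all_order all_algebra all_field.
Set Implicit Arguments. Unset Strict Implicit. Unset Printing Implicit Defensive.
Import Order.TTheory GRing.Theory Num.Theory.
Local Open Scope ring_scope.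

Definition is_subring (T : nzRingType) (S : T -> Prop) : Prop :=
  S 1 /\ (forall x y, S x -> S y -> S (x - y)) /\ (forall x y, S x -> S y -> S (x * y)).

Definition is_order (L : fieldExtType rat) (G : L -> Prop) : Prop :=
  [/\ is_subring G,
      (exists s : seq L, forall x, G x <->
          exists z : 'I_(size s) -> int, x = \sum_(i < size s) (z i)%:~R * s`_i)
    & (exists s : seq L, (forall x, x \in s -> G x) /\ <<s>>%VS = fullv)].

Definition Zgen (L : fieldExtType rat) (d : nat) (G : L -> Prop) : L -> Prop :=
  fun x => forall S : L -> Prop, is_subring S ->
             (forall g, G g -> S (d%:R * g)) -> S x.

(* f : L -> A restricts to a ring morphism G -> R (only values on G matter). *)
Definition is_hom (L : fieldExtType rat) (A : algType rat)
    (G : L -> Prop) (R : A -> Prop) (f : L -> A) : Prop :=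
  [/\ forall x, G x -> R (f x),
      f 1 = 1,
      forall x y, G x -> G y -> f (x + y) = f x + f y
    & forall x y, G x -> G y -> f (x * y) = f x * f y].

Definition conj_rel (L : fieldExtType rat) (A : algType rat)
    (G : L -> Prop) (R : A -> Prop) (f g : L -> A) : Prop :=
  exists u v : A, [/\ R u, R v, u * v = 1, v * u = 1 &
                      forall x, G x -> g x = u * f x * v].

(* Hom(G, R) / R^x : the type of G-structures on R, as equivalence classes. *)
Definition structures (L : fieldExtType rat) (A : algType rat)
    (G : L -> Prop) (R : A -> Prop) : Type :=
  { C : (L -> A) -> Prop |
    exists f, is_hom G R f /\ C = (fun g => is_hom G R g /\ conj_rel G R f g) }.

(* Main.v *)
Require Import Defs.
From HB Require Import structures.
From mathcomp Require Import all_boot all_order all_algebra all_field.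
From Stdlib Require Import ClassicalEpsilon ProofIrrelevance PropExtensionality FunctionalExtensionality.
Set Implicit Arguments. Unset Strict Implicit.
Import GRing.Theory Num.Theory.
Local Open Scope ring_scope.

Section Helpers.
Variables (L : fieldExtType rat) (A : algType rat).

Lemma sr0 (T : nzRingType) (S : T -> Prop) : is_subring S -> S 0.
Proof. move=> [h1 [hB _]]; rewrite -(subrr 1); exact: hB. Qed.

Lemma srN (T : nzRingType) (S : T -> Prop) x : is_subring S -> S x -> S (- x).
Proof. move=> hS Sx; rewrite -sub0r; case: (hS) => [_ [hB _]]; apply: hB => //; exact: (sr0 hS). Qed.

Lemma srD (T : nzRingType) (S : T -> Prop) x y : is_subring S -> S x -> S y -> S (x + y).
Proof. move=> hS Sx Sy; rewrite -(opprK y); case: (hS) => [_ [hB _]]; apply: hB => //; exact: (srN hS). Qed.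

Lemma srMn (T : nzRingType) (S : T -> Prop) x n : is_subring S -> S x -> S (x *+ n).
Proof. move=> hS Sx; elim: n => [|n IH]; first by rewrite mulr0n; exact: (sr0 hS). by rewrite mulrS; apply: (srD hS). Qed.

Lemma hom0 (G : L -> Prop) (R : A -> Prop) (f : L -> A) : is_subring G -> is_hom G R f -> f 0 = 0.
Proof.
move=> hG [_ _ hD _]; have G0 := sr0 hG.
have := hD 0 0 G0 G0; rewrite addr0 => h.
by apply: (@addrI _ (f 0)); rewrite addr0 -h.
Qed.

Lemma homN (G : L -> Prop) (R : A -> Prop) (f : L -> A) x : is_subring G -> is_hom G R f -> G x -> f (- x) = - f x.
Proof.
move=> hG hf Gx; have := hf; case=> [_ _ hD _].
have := hD x (- x) Gx (srN hG Gx); rewrite subrr (hom0 hG hf) => h.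
by apply: (@addrI _ (f x)); rewrite -h subrr.
Qed.

Lemma homB (G : L -> Prop) (R : A -> Prop) (f : L -> A) x y : is_subring G -> is_hom G R f -> G x -> G y ->
  f (x - y) = f x - f y.
Proof.
move=> hG hf Gx Gy; have := hf; case=> [_ _ hD _].
by rewrite hD ?(homN hG hf) //; exact: (srN hG).
Qed.

Lemma homMn (G : L -> Prop) (R : A -> Prop) (f : L -> A) x n : is_subring G -> is_hom G R f -> G x ->
  f (x *+ n) = f x *+ n.
Proof.
move=> hG hf Gx; have := hf; case=> [_ _ hD _]; elim: n => [|n IH].
  by rewrite !mulr0n (hom0 hG hf).
by rewrite !mulrS hD ?IH //; exact: (srMn _ hG).
Qed.


Lemma conj_refl (G : L -> Prop) (R : A -> Prop) f : is_subring R -> conj_rel G R f f.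
Proof. move=> [h1 _]; exists 1, 1; split => //; try by rewrite mulr1.
by move=> x _; rewrite mul1r mulr1. Qed.

Lemma conj_sym (G : L -> Prop) (R : A -> Prop) f g : conj_rel G R f g -> conj_rel G R g f.
Proof.
move=> [u [v [Ru Rv uv vu h]]]; exists v, u; split => // x Gx.
by rewrite h // !mulrA vu mul1r -mulrA vu mulr1.
Qed.

Lemma conj_trans (G : L -> Prop) (R : A -> Prop) f g k : is_subring R ->
  conj_rel G R f g -> conj_rel G R g k -> conj_rel G R f k.
Proof.
move=> [_ [_ hM]] [u [v [Ru Rv uv vu h]]] [w [w' [Rw Rw' ww ww' h']]].
exists (w * u), (v * w'); split; try exact: hM.
- by rewrite mulrA -(mulrA w) uv mulr1.
- by rewrite mulrA -(mulrA v) ww' mulr1.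
- by move=> x Gx; rewrite h' // h // !mulrA.
Qed.

Lemma Zgen_sub d (G : L -> Prop) x : is_subring G -> Zgen d G x -> G x.
Proof.
move=> hG Zx; apply: Zx => // g Gg; case: (hG) => [h1 [_ hM]]; apply: hM => //.
exact: srMn.
Qed.

Lemma Zgen_mul d (G : L -> Prop) x : G x -> Zgen d G (d%:R * x).
Proof. by move=> Gx S _ h; apply: h. Qed.

Lemma hom_restr d (G : L -> Prop) (R R' : A -> Prop) f : is_subring G -> is_subring R' ->
  (forall x, R x -> R' (d%:R * x)) -> is_hom G R f -> is_hom (Zgen d G) R' f.
Proof.
move=> hG hR' hd hf; have := hf; case=> [hR h1 hD hM]; split => //.
- move=> x Zx; suff: G x /\ R' (f x) by case.
  apply: (Zx (fun y => G y /\ R' (f y))).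
  + split; [split|split].
    * by case: hG.
    * by rewrite h1; case: hR'.
    * move=> a b [Ga Ra] [Gb Rb]; split; first by case: hG => [_ [hB _]]; apply: hB.
      by rewrite (homB hG hf) //; case: hR' => [_ [hB _]]; apply: hB.
    * move=> a b [Ga Ra] [Gb Rb]; split; first by case: hG => [_ [_ hM']]; apply: hM'.
      by rewrite hM //; case: hR' => [_ [_ hM']]; apply: hM'.
  + move=> g Gg; have Gd : G (d%:R * g) by rewrite mulr_natl; exact: srMn.
    split => //; rewrite mulr_natl (homMn _ hG hf Gg) -mulr_natl; apply: hd; exact: hR.
- by move=> x y /(Zgen_sub hG) Gx /(Zgen_sub hG) Gy; apply: hD.
- by move=> x y /(Zgen_sub hG) Gx /(Zgen_sub hG) Gy; apply: hM.
Qed.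

Lemma conj_extend d (G : L -> Prop) (R R' : A -> Prop) f1 f2 : (0 < d)%N -> is_subring G ->
  is_hom G R f1 -> is_hom G R f2 -> (forall x, R' x -> R x) ->
  conj_rel (Zgen d G) R' f1 f2 -> conj_rel G R f1 f2.
Proof.
move=> d0 hG hf1 hf2 hR'R [u [v [Ru Rv uv vu h]]]; exists u, v; split; try exact: hR'R; try done.
move=> x Gx; have := h _ (@Zgen_mul d G x Gx).
rewrite mulr_natl (homMn _ hG hf1 Gx) (homMn _ hG hf2 Gx) mulrnAr mulrnAl => e.
apply/eqP; rewrite -subr_eq0; apply/eqP.
have : (d%:R : rat) *: (f2 x - u * f1 x * v) = 0 by rewrite scaler_nat mulrnBl e subrr.
move/eqP; rewrite scaler_eq0 => /orP [|/eqP //].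
by rewrite pnatr_eq0 => /eqP dd; rewrite dd in d0.
Qed.

End Helpers.

Theorem lemma10p10 (A : algType rat) (L : fieldExtType rat)
    (R R' : A -> Prop) (G : L -> Prop) (d : nat) :
  is_subring R -> is_subring R' -> is_order G -> (0 < d)%N ->
  (forall x, R x -> R' (d%:R * x)) ->
  (forall x, R' x -> R x) ->
  exists F : structures G R -> structures (Zgen d G) R', injective F.
Proof.
move=> hR hR' hG d0 hd hR'R.
have hGs : is_subring G by case: hG.
pose rep (C : structures G R) :=
  proj1_sig (constructive_indefinite_description _ (proj2_sig C)).
have repP : forall C, is_hom G R (rep C) /\
    proj1_sig C = (fun g => is_hom G R g /\ conj_rel G R (rep C) g) :=
  fun C => proj2_sig (constructive_indefinite_description _ (proj2_sig C)).
have homr C : is_hom (Zgen d G) R' (rep C) := hom_restr hGs hR' hd (proj1 (repP C)).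
exists (fun C => exist _ (fun g => is_hom (Zgen d G) R' g /\ conj_rel (Zgen d G) R' (rep C) g)
  (ex_intro _ (rep C) (conj (homr C) erefl))).
move=> C1 C2 e.
have e1 := f_equal (fun P => proj1_sig P (rep C2)) e; simpl in e1.
have : is_hom (Zgen d G) R' (rep C2) /\ conj_rel (Zgen d G) R' (rep C1) (rep C2).
  by rewrite e1; split; [exact: homr | exact: conj_refl].
case=> _ cj.
have c12 := conj_extend d0 hGs (proj1 (repP C1)) (proj1 (repP C2)) hR'R cj.
case: (repP C1) (repP C2) => _ E1 [_ E2].
clear e e1 cj; move: E1 E2 c12; case: C1 => P1 H1; case: C2 => P2 H2 /= E1 E2 c12.
have eP : P1 = P2.
  rewrite E1 E2; apply: functional_extensionality => g.
  apply: propositional_extensionality; split => [[hg cg]|[hg cg]]; split => //.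
    exact: conj_trans hR (conj_sym c12) cg.
  exact: conj_trans hR c12 cg.
subst P2; f_equal; apply: proof_irrelevance.
Qed.
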